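(* For every $\varepsilon > 0$, there exists a set of squares of total area $\frac{8}{5} + \varepsilon$ that cannot be packed into the unit disk (the disk of radius $1$).
   Context: A packing of a set of squares into a container is a placement of congruent copies of the squares (translations and rotations allowed) inside the container such that the interiors of any two placed squares are disjoint. *)

(* Defs.v *)
From Stdlib Require Import Reals List.
Open Scope R_scope.

(* The closed square of side s, centred at (cx, cy), rotated by angle t:
   points whose coordinates in the rotated frame (cos t, sin t), (-sin t, cos t)
   relative to the centre are at most s/2 in absolute value. *)
Definition in_square (s cx cy t x y : R) : Prop :=
  Rabs ((x - cx) * cos t + (y - cy) * sin t) <= s / 2 /\
  Rabs (- (x - cx) * sin t + (y - cy) * cos t) <= s / 2.

Definition in_square_interior (s cx cy t x y : R) : Prop :=
  Rabs ((x - cx) * cos t + (y - cy) * sin t) < s / 2 /\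
  Rabs (- (x - cx) * sin t + (y - cy) * cos t) < s / 2.

Definition in_unit_disk (x y : R) : Prop := x ^ 2 + y ^ 2 <= 1.

(* A packing of the squares with side lengths l (a finite multiset, given as a
   list) into the unit disk: a placement (centre and rotation angle) of each
   square such that every placed square lies in the disk and the interiors of
   any two distinct placed squares are disjoint. *)
Definition packable_in_unit_disk (l : list R) : Prop :=
  exists (cx cy t : nat -> R),
    (forall i, (i < length l)%nat -> forall x y,
        in_square (nth i l 0) (cx i) (cy i) (t i) x y -> in_unit_disk x y) /\
    (forall i j, (i < length l)%nat -> (j < length l)%nat -> i <> j ->
       forall x y,
         ~ (in_square_interior (nth i l 0) (cx i) (cy i) (t i) x y /\
            in_square_interior (nth j l 0) (cx j) (cy j) (t j) x y)).

Definition total_area (l : list R) : R :=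
  fold_right (fun s acc => s ^ 2 + acc) 0 l.

(* Main.v *)
Require Import Defs.
From Stdlib Require Import Reals List Lra Psatz Lia.
Open Scope R_scope.

Lemma cs1 (t : R) : cos t * cos t + sin t * sin t = 1.
Proof. pose proof (sin2_cos2 t) as H. unfold Rsqr in H. lra. Qed.

Lemma corner_aux s cx cy t e d : 0 < s -> 5 * s^2 / 4 > 1 -> cx^2 + cy^2 >= s^2/4 ->
  e*e = 1 -> d*d = 1 -> Rabs e = 1 -> Rabs d = 1 ->
  e*(cx*cos t + cy*sin t) = Rabs (cx*cos t + cy*sin t) ->
  d*(-cx*sin t + cy*cos t) = Rabs (-cx*sin t + cy*cos t) ->
  exists x y, in_square s cx cy t x y /\ ~ in_unit_disk x y.
Proof.
  intros Hs H5 Hc He Hd Hea Hda.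
  assert (Hcs : cos t * cos t + sin t * sin t = 1) by apply cs1.
  set (c := cos t) in *. set (sn := sin t) in *.
  set (p := cx*c + cy*sn). set (q := -cx*sn + cy*c).
  intros Hep Hdq.
  assert (Hpq : p*p + q*q = cx^2+cy^2).
  { unfold p, q. transitivity ((cx^2+cy^2)*(c*c+sn*sn)); [ring| rewrite Hcs; ring]. }
  exists (cx + (s/2)*(e*c - d*sn)), (cy + (s/2)*(e*sn + d*c)).
  unfold in_square; fold c sn.
  split; [split|].
  - replace ((cx + s / 2 * (e * c - d * sn) - cx) * c + (cy + s / 2 * (e * sn + d * c) - cy) * sn)
      with ((s/2)*e*(c*c+sn*sn)) by ring. rewrite Hcs, Rmult_1_r, Rabs_mult, Hea,
      (Rabs_right (s/2)) by lra; lra.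
  - replace (- (cx + s / 2 * (e * c - d * sn) - cx) * sn + (cy + s / 2 * (e * sn + d * c) - cy) * c)
      with ((s/2)*d*(c*c+sn*sn)) by (clear; field). rewrite Hcs, Rmult_1_r, Rabs_mult, Hda,
      (Rabs_right (s/2)) by lra; lra.
  - unfold in_unit_disk.
    replace ((cx + s / 2 * (e * c - d * sn)) ^ 2 + (cy + s / 2 * (e * sn + d * c)) ^ 2)
      with (cx^2+cy^2 + s*(e*p + d*q) + (s^2/4)*(e*e+d*d)*(c*c+sn*sn)) by (unfold p, q; clear; field).
    rewrite Hcs, He, Hd, Hep, Hdq.
    pose proof (Rabs_pos p); pose proof (Rabs_pos q).
    assert (Hsum : (Rabs p + Rabs q)^2 >= s^2/4).
    { pose proof (Rsqr_abs p) as A1; pose proof (Rsqr_abs q) as A2; unfold Rsqr in A1, A2. nra. }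
    assert (Hge : Rabs p + Rabs q >= s/2) by nra.
    nra.
Qed.

Lemma sgn_ex (p : R) : exists e, e*e = 1 /\ Rabs e = 1 /\ e*p = Rabs p.
Proof.
  destruct (Rle_dec 0 p).
  - exists 1. rewrite Rabs_R1, Rabs_right by lra. split; [ring|split;[ring|ring]].
  - exists (-1). rewrite (Rabs_left (-1)) by lra. rewrite Rabs_left by lra. split; [ring|split;[ring|ring]].
Qed.

Lemma corner_out s cx cy t : 0 < s -> 5 * s^2 / 4 > 1 -> cx^2 + cy^2 >= s^2/4 ->
  exists x y, in_square s cx cy t x y /\ ~ in_unit_disk x y.
Proof.
  intros.
  destruct (sgn_ex (cx*cos t + cy*sin t)) as (e & ? & ? & ?).
  destruct (sgn_ex (-cx*sin t + cy*cos t)) as (d & ? & ? & ?).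
  apply (corner_aux s cx cy t e d); assumption.
Qed.

Lemma interior_close s cx cy t x y : 0 < s -> (x-cx)^2 + (y-cy)^2 < s^2/4 ->
  in_square_interior s cx cy t x y.
Proof.
  intros Hs Hd.
  assert (Hcs : cos t * cos t + sin t * sin t = 1) by apply cs1.
  set (a := (x - cx) * cos t + (y - cy) * sin t).
  set (b := - (x - cx) * sin t + (y - cy) * cos t).
  assert (Hab : a*a + b*b = (x-cx)^2 + (y-cy)^2).
  { unfold a, b. transitivity (((x-cx)^2+(y-cy)^2)*(cos t * cos t + sin t * sin t)); [ring| rewrite Hcs; ring]. }
  pose proof (Rsqr_abs a) as A1; pose proof (Rsqr_abs b) as A2; unfold Rsqr in A1, A2.
  pose proof (Rabs_pos a); pose proof (Rabs_pos b).
  split; fold a b; nra.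
Qed.

Theorem lemma2 : forall eps : R, 0 < eps ->
  exists l : list R,
    Forall (fun s => 0 < s) l /\
    total_area l = 8 / 5 + eps /\
    ~ packable_in_unit_disk l.
Proof.
  intros eps Heps.
  set (s := sqrt (4/5 + eps/2)).
  assert (Hs2 : s^2 = 4/5 + eps/2) by (unfold s; simpl; rewrite Rmult_1_r, sqrt_sqrt; lra).
  assert (Hs : 0 < s) by (unfold s; apply sqrt_lt_R0; lra).
  exists (s :: s :: nil). split; [|split].
  - repeat constructor; assumption.
  - simpl. simpl in Hs2. lra.
  - intros (cx & cy & t & Hin & Hdis).
    assert (HD : (cx 0%nat - cx 1%nat)^2 + (cy 0%nat - cy 1%nat)^2 >= s^2).
    { destruct (Rlt_le_dec ((cx 0%nat - cx 1%nat)^2 + (cy 0%nat - cy 1%nat)^2) (s^2)) as [Hlt|Hge]; [|lra].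
      exfalso. apply (Hdis 0%nat 1%nat ltac:(simpl; lia) ltac:(simpl; lia) ltac:(lia)
        ((cx 0%nat + cx 1%nat)/2) ((cy 0%nat + cy 1%nat)/2)).
      simpl. split; apply interior_close; try assumption.
      + replace (((cx 0%nat + cx 1%nat) / 2 - cx 0%nat) ^ 2 + ((cy 0%nat + cy 1%nat) / 2 - cy 0%nat) ^ 2)
          with (((cx 0%nat - cx 1%nat)^2 + (cy 0%nat - cy 1%nat)^2)/4) by field. lra.
      + replace (((cx 0%nat + cx 1%nat) / 2 - cx 1%nat) ^ 2 + ((cy 0%nat + cy 1%nat) / 2 - cy 1%nat) ^ 2)
          with (((cx 0%nat - cx 1%nat)^2 + (cy 0%nat - cy 1%nat)^2)/4) by field. lra. }
    assert (H5 : 5 * s^2 / 4 > 1) by lra.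
    assert (Hpar : 2*(cx 0%nat ^2 + cy 0%nat ^2) + 2*(cx 1%nat ^2 + cy 1%nat ^2)
       = ((cx 0%nat - cx 1%nat)^2 + (cy 0%nat - cy 1%nat)^2)
         + ((cx 0%nat + cx 1%nat)^2 + (cy 0%nat + cy 1%nat)^2)) by ring.
    assert (Hnn : 0 <= (cx 0%nat + cx 1%nat)^2 + (cy 0%nat + cy 1%nat)^2) by (pose proof (pow2_ge_0 (cx 0%nat + cx 1%nat)); pose proof (pow2_ge_0 (cy 0%nat + cy 1%nat)); lra).
    destruct (Rle_dec (s^2/4) (cx 0%nat ^2 + cy 0%nat ^2)) as [H0|H0].
    + destruct (corner_out s (cx 0%nat) (cy 0%nat) (t 0%nat) Hs H5 ltac:(lra)) as (x & y & Hsq & Hout).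
      apply Hout. apply (Hin 0%nat ltac:(simpl; lia)). exact Hsq.
    + destruct (corner_out s (cx 1%nat) (cy 1%nat) (t 1%nat) Hs H5 ltac:(lra)) as (x & y & Hsq & Hout).
      apply Hout. apply (Hin 1%nat ltac:(simpl; lia)). exact Hsq.
Qed.
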